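(* Let $A:\mathbb{R}\to\mathbb{R}^{n\times n}$, $t\mapsto A(t)=(a_{kl}(t))$, be piecewise continuous such that for every $t$ the matrix $A(t)$ is Metzler with zero row sums, and let $\zeta$ be a solution of $\dot{x}=A(t)x$ defined on $[t_0,t_1]$. Let $G,H$ be nonempty disjoint sets with $G\cup H=\{1,\dots,n\}$, and define $a_{GH}=\sum_{k\in G,\,l\in H}\int_{t_0}^{t_1}a_{kl}(t)\,\mathrm{d}t$, $a_{HG}=\sum_{k\in H,\,l\in G}\int_{t_0}^{t_1}a_{kl}(t)\,\mathrm{d}t$, $a_{HH}=\sum_{k,l\in H,\,k\neq l}\int_{t_0}^{t_1}a_{kl}(t)\,\mathrm{d}t$. Let $g^{\min}=\min_{k\in G}\zeta_k(t_0)$, $g^{\max}=\max_{k\in G}\zeta_k(t_0)$, and let $\mu^{\min},\mu^{\max}$ be real numbers with $\mu^{\min}\le\min_{1\le k\le n}\zeta_k(t_0)$ and $\mu^{\max}\ge\max_{1\le k\le n}\zeta_k(t_0)$. Then: (i) every component $\zeta_k(t_1)$ with $k\in G$ lies in the interval $[\mu^{\min}+(g^{\min}-\mu^{\min})e^{-a_{GH}},\ \mu^{\max}-(\mu^{\max}-g^{\max})e^{-a_{GH}}]$; (ii) at least one component $\zeta_k(t_1)$ with $k\in H$ lies in the interval $[\mu^{\min}+(g^{\min}-\mu^{\min})\beta,\ \mu^{\max}-(\mu^{\max}-g^{\max})\beta]$, where $$\beta=\frac{e^{-a_{GH}}\,a_{HG}/|H|}{1+e^{a_{HH}}a_{HG}/|H|+e^{a_{HH}}a_{HH}}$$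 and $|H|$ is the number of elements of $H$.
   Context: A real square matrix is Metzler if all its off-diagonal entries are nonnegative; it has zero row sums if each of its rows sums to zero. *)

(* Defs.v *)
From HB Require Import structures.
From mathcomp Require Import all_boot all_order all_algebra.
From mathcomp Require Import all_classical all_reals all_analysis.
Set Implicit Arguments. Unset Strict Implicit. Unset Printing Implicit Defensive.
Import Order.TTheory GRing.Theory Num.Theory.
Import numFieldNormedType.Exports.
Local Open Scope classical_set_scope.
Local Open Scope ring_scope.

Definition pw_continuous (R : realType) (f : R -> R) : Prop :=
  forall a b : R, a <= b ->
    exists s : seq R,
      (forall x, a <= x <= b -> x \notin s -> {for x, continuous f}) /\
      (forall x, x \in s -> cvg (f @ x^'-) /\ cvg (f @ x^'+)).

Definition pw_continuous_mx (R : realType) (n : nat) (A : R -> 'M[R]_n) : Prop :=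
  forall k l : 'I_n, pw_continuous (fun t => A t k l).

Definition metzler (R : realType) (n : nat) (M : 'M[R]_n) : Prop :=
  forall k l : 'I_n, k != l -> 0 <= M k l.

Definition zero_row_sums (R : realType) (n : nat) (M : 'M[R]_n) : Prop :=
  forall k : 'I_n, \sum_(l < n) M k l = 0.

(* zeta : R -> 'I_n -> R is a solution of x' = A(t) x on [t0,t1]
   (in the sense appropriate for a piecewise continuous right-hand side):
   each component is continuous on [t0,t1] and, except at finitely many
   points, differentiable with  zeta_k'(t) = sum_l a_kl(t) zeta_l(t). *)
Definition is_solution (R : realType) (n : nat) (A : R -> 'M[R]_n)
    (zeta : R -> 'I_n -> R) (t0 t1 : R) : Prop :=
  (forall k : 'I_n, {within `[t0, t1], continuous (fun t => zeta t k)}) /\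
  exists s : seq R, forall t, t0 < t < t1 -> t \notin s ->
    forall k : 'I_n,
      derivable (fun u => zeta u k) t 1 /\
      derive1 (fun u => zeta u k) t = \sum_(l < n) A t k l * zeta t l.

Definition intR (R : realType) (f : R -> R) (a b : R) : R :=
  Rintegral (@lebesgue_measure R) `[a, b] f.

(* Main.v *)
Set Warnings "-all".
Require Import Defs.
From HB Require Import structures.
From mathcomp Require Import all_boot all_order all_algebra.
From mathcomp Require Import all_classical all_reals all_analysis.
From mathcomp.algebra_tactics Require Import ring lra.
Import Order.TTheory GRing.Theory Num.Theory.
Import numFieldNormedType.Exports.
Local Open Scope ring_scope.
Local Open Scope classical_set_scope.
Section Mono.
Variable R : realType.

Definition lloc (f : R -> R) (t : R) : Prop :=
  forall e : R, 0 < e -> exists2 del : R, 0 < del &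
    forall s, t - del < s -> s < t -> f s <= f t + e * (t - s).

Lemma within_lin (A : set R) (f : R -> R) (k : R) :
  {within A, continuous f} -> {within A, continuous (fun t => f t + k * t)}.
Proof.
move=> fc x.
have hc : continuous (fun t : R => k * t).
  move=> y; apply: continuousM; [exact: cst_continuous|by move=> ? ].
have := continuous_subspaceT (A := A) hc.
move=> /(_ x) hx.
exact: (continuousD (fc x) hx).
Qed.

Lemma monoA0 (I : finType) (P : pred I) (f : I -> R -> R) (a b c : R) :
  a <= b ->
  (forall i, P i -> {within `[a, b], continuous (f i)}) ->
  (forall t, a < t -> t <= b -> forall i, P i ->
     (forall j, P j -> f i t <= f j t) -> lloc (f i) t) ->
  (forall i, P i -> c <= f i a) -> forall i, P i -> c <= f i b.
Proof.
move=> ab fc loc ca j Pj.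
rewrite leNgt; apply/negP => fjb.
pose d0 := c - f j b.
have d0p : 0 < d0 by rewrite /d0 subr_gt0.
pose eps := d0 / (2 * (b - a + 1)).
have den : 0 < 2 * (b - a + 1) by apply: mulr_gt0 => //; lra.
have epsp : 0 < eps by apply: divr_gt0.
have epsb : 2 * eps * (b - a) < d0.
  have -> : 2 * eps * (b - a) = d0 * ((b - a) / (b - a + 1)).
    rewrite /eps; field; lra.
  rewrite -[X in _ < X]mulr1 ltr_pM2l //.
  by rewrite ltr_pdivrMr; lra.
pose g i t := f i t + (2 * eps) * t.
have gc : forall i, P i -> {within `[a, b], continuous (g i)}.
  by move=> i Pi; apply: within_lin; apply: fc.
have EX : forall i, exists t, P i -> t \in `[a, b]%R /\ forall u, u \in `[a, b]%R -> g i t <= g i u.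
  move=> i; case: (boolP (P i)) => Pi; last by exists a.
  have [t tin tmin] := EVT_min ab (gc i Pi).
  by exists t => _; split.
have [tm tmP] := choice EX.
case: (arg_minP (fun i => g i (tm i)) Pj) => k Pk kmin.
have [Tin Tmin] := tmP k Pk.
set T := tm k in Tin Tmin kmin.
have gkT : g k T < g k a.
  have h1 := kmin j Pj.
  have [_ h2] := tmP j Pj.
  have h3 := h2 b; rewrite in_itv /= ab lexx in h3.
  have h4 := ca k Pk.
  move: (h3 isT) h1 h4; rewrite /g /d0 in epsb *; lra.
have aT : a < T.
  move: Tin; rewrite in_itv /= => /andP[aT Tb].
  rewrite lt_neqAle aT andbT; apply/negP => /eqP aTe.
  by move: gkT; rewrite aTe ltxx.
have Tb : T <= b by move: Tin; rewrite in_itv /= => /andP[].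
have act : forall j', P j' -> f k T <= f j' T.
  move=> j' Pj'.
  have h1 := kmin j' Pj'.
  have [Tin' Tmin'] := tmP j' Pj'.
  have h2 := Tmin' T Tin.
  move: h1 h2; rewrite /g; lra.
have [del delp dl] := loc T aT Tb k Pk act eps epsp.
pose s := Num.max ((a + T) / 2) (T - del / 2).
have s1 : (a + T) / 2 <= s by rewrite /s le_max lexx.
have s2 : T - del / 2 <= s by rewrite /s le_max lexx orbT.
have sT : s < T by rewrite /s gt_max; apply/andP; split; lra.
have sin : s \in `[a, b]%R by rewrite in_itv /=; apply/andP; split; lra.
have h1 := Tmin s sin.
have h2 := dl s ltac:(lra) sT.
have : 0 < eps * (T - s) by apply: mulr_gt0 => //; lra.
move: h1 h2; rewrite /g; lra.
Qed.

Lemma monoA1 (I : finType) (P : pred I) (f : I -> R -> R) (a b c : R) :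
  a <= b ->
  (forall i, P i -> {within `[a, b], continuous (f i)}) ->
  (forall t, a < t -> t < b -> forall i, P i ->
     (forall j, P j -> f i t <= f j t) -> lloc (f i) t) ->
  (forall i, P i -> c <= f i a) -> forall i, P i -> c <= f i b.
Proof.
rewrite le_eqVlt => /predU1P[<- _ _ ca //|ab fc loc ca j Pj].
rewrite leNgt; apply/negP => fjb.
have [_ _ cb] := (continuous_within_itvP (f j) ab).1 (fc j Pj).
have /cvgrPdist_lt/(_ (c - f j b)) := cb.
rewrite subr_gt0 => /(_ fjb) nb.
have [b' [ab' b'b fb']] : exists b', [/\ a < b', b' < b & f j b' < c].
  near (b^'-) => b'.
  exists b'; split.
  - by near: b'; exact: nbhs_left_gt.
  - by near: b'; exact: nbhs_left_lt.
  - have : `|f j b - f j b'| < c - f j b by near: b'.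
    by rewrite ltr_distlC => /andP[h1 h2]; lra.
have : c <= f j b'.
  apply: (@monoA0 I P f a b' c) => //.
  - exact: ltW.
  - move=> i Pi; apply: continuous_subspaceW (fc i Pi).
    by apply: subset_itvl; rewrite bnd_simp; exact: ltW.
  - move=> t ta tb i Pi act; apply: loc => //; exact: (le_lt_trans tb).
lra.
Unshelve. all: by end_near.
Qed.

Lemma mono (I : finType) (P : pred I) (f : I -> R -> R) (S : seq R) (a b c : R) :
  a <= b ->
  (forall i, P i -> {within `[a, b], continuous (f i)}) ->
  (forall t, a < t -> t < b -> t \notin S -> forall i, P i ->
     (forall j, P j -> f i t <= f j t) -> lloc (f i) t) ->
  (forall i, P i -> c <= f i a) -> forall i, P i -> c <= f i b.
Proof.
elim: S a b c => [|x S IH] a b c ab fc loc.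
  by apply: monoA1 => // t ta tb; apply: loc.
have [/andP[ax xb]|nx] := boolP ((a < x) && (x < b)).
  move=> ca; apply: (IH x b) => //.
  - exact: ltW.
  - move=> i Pi; apply: continuous_subspaceW (fc i Pi).
    by apply: subset_itvr; rewrite bnd_simp; exact: ltW.
  - move=> t xt tb tS; apply: loc => //; first exact: lt_trans xt.
    by rewrite in_cons negb_or tS andbT; apply/eqP => tx; move: xt; rewrite tx ltxx.
  - apply: (IH a x) => //.
    + exact: ltW.
    + move=> i Pi; apply: continuous_subspaceW (fc i Pi).
      by apply: subset_itvl; rewrite bnd_simp; exact: ltW.
    + move=> t ta tx tS; apply: loc => //; first exact: lt_trans xb.
      by rewrite in_cons negb_or tS andbT; apply/eqP => tx'; move: tx; rewrite tx' ltxx.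
apply: IH => // t ta tb tS; apply: loc => //.
rewrite in_cons negb_or tS andbT; apply/eqP => tx; move: nx; rewrite -tx ta tb.
by [].
Qed.

Lemma lloc_derive (f : R -> R) (t d : R) : is_derive t (1:R) f d -> 0 <= d -> lloc f t.
Proof.
move=> [df dv] d0 e e0.
have hc : (fun h => h^-1 *: ((f \o shift t) (h *: 1) - f t)) @ 0^' --> d.
  by rewrite -dv; exact: df.
move: hc => /cvgrPdist_lt /(_ e e0).
rewrite near_withinE => /nbhs_ballP [del /= delp hb].
exists del => // s s1 s2.
have hs : ball (0:R) del (s - t).
  rewrite /ball /= sub0r normrN ltr_norml; apply/andP; split; lra.
have hne : s - t != 0 by rewrite subr_eq0; apply/eqP => st; move: s2; rewrite st ltxx.
have := hb _ hs hne.
have -> : (s - t)%:A + t = s :> R by rewrite /GRing.scale /= mulr1 subrK.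
rewrite [X in `|_ - X|]/GRing.scale /=.
rewrite ltr_distlC => /andP[h1 _].
have st : s - t < 0 by lra.
have : (d - e) * (s - t) >= (s - t)^-1 * (f s - f t) * (s - t).
  by rewrite ler_wnM2r //; [exact: ltW | exact: ltW].
rewrite mulrAC mulVf // mul1r.
have : 0 <= d * (t - s) by apply: mulr_ge0 => //; lra.
move=> h2 h3.
have : (d - e) * (s - t) = - (d * (t - s)) + e * (t - s) by ring.
lra.
Qed.
End Mono.
Local Close Scope classical_set_scope.
Section Alg.
Variable R : realType.
Variable n : nat.
Variables (G H : {set 'I_n}).
Hypothesis dGH : [disjoint G & H].
Hypothesis uGH : G :|: H = finset.setT.

Lemma HGc l : (l \in H) = (l \notin G).
Proof.
have : l \in G :|: H by rewrite uGH inE.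
rewrite inE; case lG: (l \in G); case lH: (l \in H) => //= _.
by move: dGH => /pred0P /(_ l); rewrite /= lG lH.
Qed.

Lemma sum_split (F : 'I_n -> R) : \sum_l F l = \sum_(l in G) F l + \sum_(l in H) F l.
Proof.
rewrite (bigID (fun l => l \in G)) /=; congr (_ + _).
by apply: eq_bigl => l; rewrite HGc.
Qed.

Lemma GneH k l : k \in G -> l \in H -> k != l.
Proof. by move=> kG lH; apply/eqP => kl; move: lH; rewrite HGc -kl kG. Qed.

Variable M : 'M[R]_n.
Hypothesis Mm : metzler M.
Hypothesis Mz : zero_row_sums M.

Lemma alg0 (v : 'I_n -> R) k : \sum_l M k l * v l = \sum_l M k l * (v l - v k).
Proof.
under [RHS]eq_bigr do rewrite mulrBr.
by rewrite sumrB -mulr_suml Mz mul0r subr0.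
Qed.

Lemma alg1 (v : 'I_n -> R) k : (forall l, v k <= v l) -> 0 <= \sum_l M k l * (v l - v k).
Proof.
move=> vk; apply: sumr_ge0 => l _.
case: (eqVneq k l) => [->|kl]; first by rewrite subrr mulr0.
by apply: mulr_ge0; [exact: Mm | rewrite subr_ge0].
Qed.

Lemma alg2 (v : 'I_n -> R) k : k \in G -> (forall l, 0 <= v l) ->
  (forall l, l \in G -> v k <= v l) ->
  - ((\sum_(l in H) M k l) * v k) <= \sum_l M k l * (v l - v k).
Proof.
move=> kG v0 vk; rewrite sum_split.
rewrite -[X in X <= _]add0r; apply: lerD.
  apply: sumr_ge0 => l lG.
  case: (eqVneq k l) => [->|kl]; first by rewrite subrr mulr0.
  by apply: mulr_ge0; [exact: Mm | rewrite subr_ge0; exact: vk].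
rewrite mulr_suml -sumrN; apply: ler_sum => l lH.
rewrite -mulrN; apply: ler_wpM2l; first by apply: Mm; exact: GneH.
by have := v0 l; lra.
Qed.

Lemma alg3 (v : 'I_n -> R) (h : R) k : k \in H -> (forall l, 0 <= v l) ->
  (forall l, l \in G -> h <= v l) ->
  (\sum_(l in G) M k l) * h - ((\sum_(l in G) M k l) + \sum_(l in H | k != l) M k l) * v k
  <= \sum_l M k l * (v l - v k).
Proof.
move=> kH v0 vh; rewrite sum_split mulrDl opprD addrA.
apply: lerD.
  rewrite -mulrBr mulr_suml; apply: ler_sum => l lG.
  apply: ler_wpM2l; first by apply: Mm; rewrite eq_sym; exact: GneH.
  by rewrite lerD2r; exact: vh.
rewrite [X in _ <= X](bigD1 k) //= subrr mulr0 add0r.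
rewrite mulr_suml -sumrN.
rewrite [X in _ <= X](eq_bigl (fun l => (l \in H) && (k != l))); last by move=> l; rewrite eq_sym.
apply: ler_sum => l /andP[lH kl].
rewrite -mulrN; apply: ler_wpM2l; first exact: Mm.
by have := v0 l; lra.
Qed.

Lemma algc k : k \in G -> (forall k' l, k' != l -> 0 <= M k' l) ->
  \sum_(l in H) M k l <= \sum_(k' in G) \sum_(l in H) M k' l.
Proof.
move=> kG _; rewrite [X in _ <= X](bigD1 k) //= lerDl; apply: sumr_ge0 => k' /andP[k'G _].
apply: sumr_ge0 => l lH; apply: Mm; exact: GneH.
Qed.
End Alg.
Local Open Scope classical_set_scope.
Section D.
Variable R : realType.
Lemma is_derive_bsum (I : finType) (P : pred I) (h : I -> R -> R) (dh : I -> R) (x : R) :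
  (forall i, P i -> is_derive x (1:R) (h i) (dh i)) ->
  is_derive x (1:R) (fun t => \sum_(i | P i) h i t) (\sum_(i | P i) dh i).
Proof.
move=> hd.
rewrite -fct_sumE.
elim/big_rec2 : _ => [|i F d Pi IH]; first exact: is_derive_cst.
exact: (is_deriveD (hd i Pi) IH).
Qed.

Lemma within_sum (A : set R) (I : finType) (P : pred I) (h : I -> R -> R) :
  (forall i, P i -> {within A, continuous (h i)}) ->
  {within A, continuous (fun t => \sum_(i | P i) h i t)}.
Proof.
move=> hc.
have -> : (fun t => \sum_(i | P i) h i t) = \sum_(i | P i) h i by rewrite fct_sumE.
elim/big_rec : _ => [|i F Pi IH]; first by move=> x; exact: cst_continuous.
move=> x; exact: (continuousD (hc i Pi x) (IH x)).
Qed.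

Lemma within_mul (A : set R) (f g : R -> R) :
  {within A, continuous f} -> {within A, continuous g} ->
  {within A, continuous (fun t => f t * g t)}.
Proof. by move=> hf hg x; exact: (continuousM (hf x) (hg x)). Qed.

Lemma within_exp (A : set R) (f : R -> R) :
  {within A, continuous f} -> {within A, continuous (fun t => expR (f t))}.
Proof. by move=> hf x; apply: (continuous_comp (hf x)); exact: continuous_expR. Qed.

Lemma within_add (A : set R) (f g : R -> R) :
  {within A, continuous f} -> {within A, continuous g} ->
  {within A, continuous (fun t => f t + g t)}.
Proof. by move=> hf hg x; exact: (continuousD (hf x) (hg x)). Qed.

Lemma within_opp (A : set R) (f : R -> R) :
  {within A, continuous f} -> {within A, continuous (fun t => - f t)}.
Proof. by move=> hf x; exact: (continuousN (hf x)). Qed.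

Lemma within_cst (A : set R) (c : R) : {within A, continuous (fun _ : R => c)}.
Proof. by move=> x; exact: cst_continuous. Qed.
End D.
Section PW.
Variable R : realType.

Lemma mem_setE (s : seq R) : [set x | x \in s] = \big[setU/set0]_(x <- s) [set x].
Proof.
elim: s => [|x s IH]; first by rewrite big_nil; apply/seteqP; split => y.
rewrite big_cons -IH; apply/seteqP; split => y /=; rewrite in_cons.
  by case/orP => [/eqP ->|ys]; [left|right].
by case => [->|->]; rewrite ?eqxx ?orbT.
Qed.

Lemma measurable_fin (s : seq R) : measurable [set x | x \in s].
Proof.
rewrite mem_setE; elim: s => [|x s IH]; first by rewrite big_nil.
by rewrite big_cons; apply: measurableU.
Qed.

Lemma measurable_fun_fin (s : seq R) (f : R -> R) : measurable_fun [set x | x \in s] f.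
Proof.
elim: s => [|x s IH].
  by rewrite (_ : [set x | x \in [::]] = set0); [exact: measurable_fun_set0 | apply/seteqP; split => y].
rewrite (_ : [set y | y \in x :: s] = [set x] `|` [set y | y \in s]); last first.
  apply/seteqP; split => y /=; rewrite in_cons.
    by case/orP => [/eqP ->|ys]; [left|right].
  by case => [->|->]; rewrite ?eqxx ?orbT.
apply/measurable_funU => //; [exact: measurable_fin | split => //].
exact: measurable_fun_set1.
Qed.

Lemma pw_integrable (f : R -> R) (a b : R) : a <= b -> pw_continuous f ->
  (@lebesgue_measure R).-integrable `[a, b] (EFin \o f).
Proof.
move=> ab /(_ a b ab) [s [Hc Hl]].
apply: measurable_bounded_integrable.
- exact: measurable_itv.
- apply: compact_finite_measure; exact: segment_compact.
- rewrite -(setUIDK `[a, b] [set x | x \in s]).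
  apply/measurable_funU.
  + by apply: measurableI; [exact: measurable_itv | exact: measurable_fin].
  + by apply: measurableD; [exact: measurable_itv | exact: measurable_fin].
  split.
    apply: measurable_funS (measurable_fun_fin s f) => //; first exact: measurable_fin.
  apply: measurable_realfun.subspace_continuous_measurable_fun.
    by apply: measurableD; [exact: measurable_itv | exact: measurable_fin].
  apply: continuous_in_subspaceT => x /set_mem [xab xs].
  apply: Hc; last by apply/negP.
  by move: xab; rewrite /= in_itv.
- have sc : compact (`[a, b] : set R) by exact: segment_compact.
  have nc := (near_covering_withinP _).2 ((compact_near_coveringP _).1 sc).
  rewrite /bounded_near /globally /=.
  apply: (nc R (nbhs +oo) (fun M x => `|f x| <= M)).
  move=> x xab.
  suff [B HB] : exists B, \forall y \near x, `|f y| <= B.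
    exists ([set y | `|f y| <= B], [set M | B <= M]); first split => //=.
      by apply: nbhs_pinfty_ge; exact: num_real.
    by move=> [y M] /= [h1 h2] _; exact: le_trans h1 h2.
  case: (boolP (x \in s)) => xs; last first.
    have := Hc x xab xs => /cvgrPdist_lt /(_ 1 ltr01) hn.
    exists (`|f x| + 1); near=> y.
    have : `|f x - f y| < 1 by near: y.
    move=> h; have t := ler_normD (f x) (f y - f x).
    rewrite [f x + _]addrC subrK distrC in t; lra.
  have [/cvgrPdist_lt /(_ 1 ltr01) h1 /cvgrPdist_lt /(_ 1 ltr01) h2] := Hl x xs.
  move: h1 h2; rewrite !near_withinE => h1 h2.
  set l1 := lim _ in h1; set l2 := lim _ in h2.
  exists (`|f x| + `|l1| + `|l2| + 1); near=> y.
  have g1 : y < x -> `|l1 - f y| < 1 by near: y.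
  have g2 : x < y -> `|l2 - f y| < 1 by near: y.
  have n1 := normr_ge0 l1; have n2 := normr_ge0 l2; have n0 := normr_ge0 (f x).
  case: (ltgtP y x) => [yx|xy|->]; last by lra.
  + have t := ler_normD l1 (f y - l1).
    rewrite [l1 + _]addrC subrK distrC in t; have := g1 yx; lra.
  + have t := ler_normD l2 (f y - l2).
    rewrite [l2 + _]addrC subrK distrC in t; have := g2 xy; lra.
Unshelve. all: by end_near.
Qed.

Lemma intR_t0 (f : R -> R) a : intR f a a = 0.
Proof. by rewrite /intR set_itv1 Rintegral_set1. Qed.

Lemma intR_ge0 (f : R -> R) a b : (forall x, a <= x <= b -> 0 <= f x) -> 0 <= intR f a b.
Proof. by move=> h; apply: Rintegral_ge0 => x; rewrite /= in_itv /=; exact: h. Qed.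

Lemma intR_cont (f : R -> R) a b : a <= b -> pw_continuous f ->
  {within `[a, b], continuous (fun t => intR f a t)}.
Proof.
move=> ab pf.
have := parameterized_integral_continuous ab (@pw_integrable f a b ab pf).
exact.
Qed.

Lemma intR_derive (f : R -> R) a b t : a < t -> t < b -> pw_continuous f ->
  {for t, continuous f} -> is_derive t (1:R) (fun u => intR f a u) (f t).
Proof.
move=> ta tb pf ft.
have ab : a <= b by apply: ltW; exact: lt_trans tb.
have [d1 d2] := continuous_FTC1_closed tb (@pw_integrable f a b ab pf) ta ft.
by apply: DeriveDef => //; rewrite -derive1E.
Qed.
End PW.
Lemma mono1 (R : realType) (f : R -> R) (S : seq R) (a b : R) : a <= b ->
  {within `[a, b], continuous f} ->
  (forall t, a < t -> t < b -> t \notin S -> lloc R f t) -> f a <= f b.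
Proof.
move=> ab fc loc.
apply: (@mono R unit predT (fun _ => f) S a b (f a) ab _ _ _ tt) => //.
by move=> t ta tb tS i _ _; exact: loc.
Qed.
Arguments alg0 {R n M} Mz v k.
Arguments alg1 {R n M} Mm v k.

Section Main.
Variable R : realType.
Variable n : nat.
Variable A : R -> 'M[R]_n.
Variables t0 t1 : R.
Variables (G H : {set 'I_n}).
Hypothesis pwA : pw_continuous_mx A.
Hypothesis MZ : forall t, metzler (A t) /\ zero_row_sums (A t).
Hypothesis t01 : t0 <= t1.
Local Close Scope classical_set_scope.
Hypothesis dGH : [disjoint G & H].
Hypothesis uGH : G :|: H = finset.setT.
Local Open Scope classical_set_scope.

Let Int k l t := intR (fun u => A u k l) t0 t.

Lemma exc_set : exists S : seq R, forall t, t0 <= t <= t1 -> t \notin S ->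
  forall k l, {for t, continuous (fun u => A u k l)}.
Proof.
have : forall p : 'I_n * 'I_n, exists s : seq R, forall t, t0 <= t <= t1 -> t \notin s ->
    {for t, continuous (fun u => A u p.1 p.2)}.
  by move=> [k l]; have [s [hs _]] := pwA k l t0 t1 t01; exists s.
move=> /choice [sf hsf].
exists (flatten [seq sf p | p <- enum {: 'I_n * 'I_n}]).
move=> t tin tS k l; apply: (hsf (k, l)) => //.
apply: contra tS => ts; apply/flattenP; exists (sf (k, l)) => //.
by apply/mapP; exists (k, l) => //; rewrite mem_enum.
Qed.

Lemma Int_cont k l : {within `[t0, t1], continuous (Int k l)}.
Proof. exact: intR_cont. Qed.

Lemma Int_t0 k l : Int k l t0 = 0.
Proof. exact: intR_t0. Qed.

Lemma Int_ge0 k l t : k != l -> 0 <= Int k l t.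
Proof. by move=> kl; apply: intR_ge0 => x _; exact: (proj1 (MZ x)). Qed.

Lemma Int_der (S0 : seq R) (HS0 : forall t, t0 <= t <= t1 -> t \notin S0 ->
  forall k l, {for t, continuous (fun u => A u k l)}) u k l :
  t0 < u -> u < t1 -> u \notin S0 -> is_derive u (1:R) (Int k l) (A u k l).
Proof.
move=> tu ut uS; apply: (@intR_derive R _ t0 t1 u tu ut (pwA k l)).
by apply: HS0 => //; rewrite !ltW.
Qed.

Lemma Int_mono k l t : k != l -> t0 <= t <= t1 -> Int k l t <= Int k l t1.
Proof.
move=> kl /andP[t0t tt1].
have [S0 HS0] := exc_set.
apply: (@mono1 R (Int k l) S0) => //.
- apply: continuous_subspaceW (Int_cont k l).
  by apply: subset_itvr; rewrite bnd_simp.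
- move=> u tu ut uS.
  have tu' : t0 < u by exact: le_lt_trans tu.
  apply: (@lloc_derive R _ u (A u k l) (@Int_der S0 HS0 u k l tu' ut uS)).
  exact: (proj1 (MZ u)).
Qed.


Variable y : R -> 'I_n -> R.
Hypothesis yc : forall k, {within `[t0, t1], continuous (fun t => y t k)}.
Hypothesis yd : exists s : seq R, forall t, t0 < t -> t < t1 -> t \notin s -> forall k,
  is_derive t (1:R) (fun u => y u k) (\sum_l A t k l * y t l).
Hypothesis y0 : forall k, 0 <= y t0 k.

Lemma step1 t : t0 <= t <= t1 -> forall k, 0 <= y t k.
Proof.
move=> /andP[t0t tt1] k.
have [s hs] := yd.
apply: (@mono R 'I_n predT (fun k t => y t k) s t0 t 0 t0t) => //.
- move=> i _; apply: continuous_subspaceW (yc i); apply: subset_itvl; rewrite bnd_simp //.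
- move=> u tu ut us i _ act.
  apply: (@lloc_derive R _ u _ (hs u tu (lt_le_trans ut tt1) us i)).
  rewrite (alg0 (proj2 (MZ u))); apply: (alg1 (proj1 (MZ u))) => l; exact: act.
Qed.

Let C t := \sum_(k in G) \sum_(l in H) Int k l t.
Variable g : R.
Hypothesis g0 : 0 <= g.
Hypothesis yg : forall k, k \in G -> g <= y t0 k.

Lemma C_cont : {within `[t0, t1], continuous C}.
Proof.
rewrite /C; apply: within_sum => k _; apply: within_sum => l _; exact: Int_cont.
Qed.

Lemma step2 t : t0 <= t <= t1 -> forall k, k \in G -> g <= expR (C t) * y t k.
Proof.
move=> /andP[t0t tt1].
have [s hs] := yd.
have [S0 HS0] := exc_set.
apply: (@mono R 'I_n (fun k => k \in G) (fun k t => expR (C t) * y t k) (s ++ S0) t0 t g t0t).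
- move=> i _; apply: continuous_subspaceW; last first.
    apply: within_mul; [apply: within_exp; exact: C_cont | exact: yc].
  by apply: subset_itvl; rewrite bnd_simp.
- move=> u tu ut uS i iG act.
  rewrite mem_cat negb_or in uS; case/andP: uS => us uS0.
  have ut1 : u < t1 := lt_le_trans ut tt1.
  have dY := hs u tu ut1 us i.
  have dC : is_derive u (1:R) C (\sum_(k in G) \sum_(l in H) A u k l).
    apply: is_derive_bsum => k _; apply: is_derive_bsum => l _.
    exact: (@Int_der S0 HS0 u k l tu ut1 uS0).
  have dE := is_derive1_comp (is_derive_expR (C u)) dC.
  have dM := is_deriveM dE dY.
  apply: (@lloc_derive R _ u _ dM).
  have uin : t0 <= u <= t1 by rewrite !ltW.
  have yge : forall l, 0 <= y u l by move=> l; exact: step1.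
  have actG : forall l, l \in G -> y u i <= y u l.
    by move=> l lG; have := act l lG; rewrite ler_pM2l // expR_gt0.
  have h2 := @alg2 R n G H dGH uGH (A u) (proj1 (MZ u)) (fun l => y u l) i iG yge actG.
  have hc := @algc R n G H dGH uGH (A u) (proj1 (MZ u)) i iG (proj1 (MZ u)).
  rewrite /= (alg0 (proj2 (MZ u))).
  set E := expR (C u) in dM *.
  set S1 := \sum_l _.
  set ci := \sum_(l in H) _ in h2 hc.
  set c := \sum_(k in G) _ in hc *.
  have E0 : 0 <= E by rewrite /E expR_ge0.
  have h3 : 0 <= (c - ci) * y u i by apply: mulr_ge0 => //; lra.
  have h2b : - (ci * y u i) <= S1 by exact: h2.
  have h4 : 0 <= E * (S1 + c * y u i) by apply: mulr_ge0 => //; lra.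
  have -> : E *: S1 + y u i *: (E * c) = E * (S1 + c * y u i).
    by rewrite /GRing.scale /=; ring.
  exact: h4.
- move=> i iG; rewrite /C big1 ?expR0 ?mul1r; first exact: yg.
  by move=> k _; rewrite big1 // => l _; exact: Int_t0.
Qed.


Variable ks : 'I_n.
Hypothesis ksH : ks \in H.
Let P t := \sum_(l in G) Int ks l t.
Let Q t := \sum_(l in H | ks != l) Int ks l t.

Lemma C_le t : t0 <= t <= t1 -> C t <= C t1.
Proof.
move=> tin; apply: ler_sum => k kG; apply: ler_sum => l lH; apply: Int_mono => //.
exact: (@GneH n G H dGH uGH k l kG lH).
Qed.

Lemma hG t : t0 <= t <= t1 -> forall l, l \in G -> g * expR (- C t1) <= y t l.
Proof.
move=> tin l lG.
have h1 := @step2 t tin l lG.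
have -> : y t l = expR (- C t) * (expR (C t) * y t l).
  by rewrite mulrA -expRD addNr expR0 mul1r.
apply: le_trans (_ : g * expR (- C t) <= _).
  by apply: ler_wpM2l => //; rewrite ler_expR lerN2; exact: C_le.
by rewrite mulrC; apply: ler_wpM2l => //; exact: expR_ge0.
Qed.

Lemma step3 : g * expR (- C t1) * (expR (P t1) - 1) <= expR (P t1 + Q t1) * y t1 ks.
Proof.
set h := g * expR (- C t1).
have h0 : 0 <= h by rewrite /h mulr_ge0 // expR_ge0.
have [s hs] := yd.
have [S0 HS0] := exc_set.
have P0 : P t0 = 0 by rewrite /P big1 // => l _; exact: Int_t0.
have Q0 : Q t0 = 0 by rewrite /Q big1 // => l _; exact: Int_t0.
have key := @mono1 R (fun t => expR (P t + Q t) * y t ks - h * (expR (P t) - 1)) (s ++ S0) t0 t1 t01.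
have : expR (P t0 + Q t0) * y t0 ks - h * (expR (P t0) - 1) <=
       expR (P t1 + Q t1) * y t1 ks - h * (expR (P t1) - 1).
  apply: key.
  - have Pc : {within `[t0, t1], continuous P}.
      by rewrite /P; apply: within_sum => l _; exact: Int_cont.
    have Qc : {within `[t0, t1], continuous Q}.
      by rewrite /Q; apply: within_sum => l _; exact: Int_cont.
    apply: within_add; last apply: within_opp.
      by apply: within_mul; [apply: within_exp; exact: within_add | exact: yc].
    apply: within_mul; first exact: within_cst.
    by apply: within_add; [exact: within_exp | exact: within_cst].
  - move=> u tu ut uS.
    rewrite mem_cat negb_or in uS; case/andP: uS => us uS0.
    have dY := hs u tu ut us ks.
    have dP : is_derive u (1:R) P (\sum_(l in G) A u ks l).
      apply: is_derive_bsum => l _; exact: (@Int_der S0 HS0 u ks l tu ut uS0).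
    have dQ : is_derive u (1:R) Q (\sum_(l in H | ks != l) A u ks l).
      apply: is_derive_bsum => l _; exact: (@Int_der S0 HS0 u ks l tu ut uS0).
    have dPQ := is_deriveD dP dQ.
    have dE := is_derive1_comp (is_derive_expR ((P + Q) u)) dPQ.
    have dM := is_deriveM dE dY.
    have dE2 := is_derive1_comp (is_derive_expR (P u)) dP.
    have dZ := is_deriveM (is_derive_cst h u (1:R)) dE2.
    have dV := is_deriveD (is_deriveB dM dZ) (is_derive_cst h u (1:R)).
    have -> : (fun t : R => expR (P t + Q t) * y t ks - h * (expR (P t) - 1)) =
      ((expR \o (P + Q)) * y^~ ks - cst h * (expR \o P) + cst h).
      by apply/funext => t; rewrite !fctE /=; ring.
    apply: (@lloc_derive R _ u _ dV).
    have uin : t0 <= u <= t1 by rewrite !ltW.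
    have yge : forall l, 0 <= y u l by move=> l; exact: step1.
    have hGu := @hG u uin.
    have h3 := @alg3 R n G H dGH uGH (A u) (proj1 (MZ u)) (fun l => y u l) h ks ksH yge hGu.
    rewrite /= /GRing.scale /= (alg0 (proj2 (MZ u))).
    set Y' := \sum_l _.
    have h3b : (\sum_(l in G) A u ks l) * h - ((\sum_(l in G) A u ks l) + \sum_(l in H | ks != l) A u ks l) * y u ks <= Y' by exact: h3.
    set p := \sum_(l in G) _ in h3b *.
    set q := \sum_(l in H | ks != l) _ in h3b *.
    have p0 : 0 <= p.
      apply: sumr_ge0 => l lG; apply: (proj1 (MZ u)).
      by rewrite eq_sym; exact: (@GneH n G H dGH uGH l ks lG ksH).
    have Q0u : 0 <= Q u by apply: sumr_ge0 => l /andP[_ kl]; exact: Int_ge0.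
    have EP : expR (P u) <= expR (P u + Q u) by rewrite ler_expR lerDl.
    have E0 : 0 <= expR (P u + Q u) by exact: expR_ge0.
    have k1 : expR (P u + Q u) * (p * h - (p + q) * y u ks) <= expR (P u + Q u) * Y'.
      by apply: ler_wpM2l.
    have k2 : 0 <= h * p * (expR (P u + Q u) - expR (P u)).
      by apply: mulr_ge0; [exact: mulr_ge0 | lra].
    have -> : (P + Q) u = P u + Q u by [].
    lra.
rewrite P0 Q0 addr0 expR0 mul1r subrr mulr0 subr0.
by move=> /(le_trans (y0 ks)); rewrite subr_ge0.
Qed.

End Main.
Lemma fin_ineq (R : realType) (g E0 x a P1 Q1 Y : R) : 0 <= g -> 0 <= E0 -> 0 <= x -> 0 <= a ->
  x <= P1 -> 0 <= Q1 -> Q1 <= a ->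
  g * E0 * (expR P1 - 1) <= expR (P1 + Q1) * Y ->
  g * (E0 * x / (1 + expR a * x + expR a * a)) <= Y.
Proof.
move=> g0 E00 x0 a0 xP Q0 Qa hyp.
move: hyp; set Ea := expR a; set eP := expR P1; set T := expR (P1 + Q1) => hyp.
have Ea0 : 0 < Ea by exact: expR_gt0.
have T0 : 0 < T by exact: expR_gt0.
have eP1 : 1 + x <= eP by apply: le_trans (expR_ge1Dx P1); lra.
have TE : T <= eP * Ea by rewrite /T expRD ler_wpM2l ?expR_ge0 // ler_expR.
have EaD : Ea - Ea * a <= 1.
  have h := expR_ge1Dx (- a).
  have e1 : Ea * expR (- a) = 1 by rewrite /Ea -expRD subrr expR0.
  have : Ea * (1 + - a) <= Ea * expR (- a) by rewrite ler_pM2l.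
  rewrite e1; lra.
set D := 1 + Ea * x + Ea * a.
have D0 : 0 < D.
  have : 0 <= Ea * x by apply: mulr_ge0 => //; lra.
  have : 0 <= Ea * a by apply: mulr_ge0 => //; lra.
  rewrite /D; lra.
have K1 : x * T <= D * (eP - 1).
  have k1 : x * T <= x * (eP * Ea) by apply: ler_wpM2l.
  have k2 : x * eP <= (1 + x) * (eP - 1).
    have : 0 <= eP * 0 + 0 by lra. nra.
  have k3 : Ea * (1 + x) <= D by rewrite /D; nra.
  have eP0 : 0 <= eP - 1 by lra.
  have k4 : Ea * (x * eP) <= Ea * ((1 + x) * (eP - 1)) by rewrite ler_pM2l.
  have k5 : Ea * (1 + x) * (eP - 1) <= D * (eP - 1) by apply: ler_wpM2r.
  nra.
have gE : 0 <= g * E0 by apply: mulr_ge0.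
have K2 : g * E0 * x * T <= D * (T * Y).
  have : g * E0 * (x * T) <= g * E0 * (D * (eP - 1)) by apply: ler_wpM2l.
  have : D * (g * E0 * (eP - 1)) <= D * (T * Y) by apply: ler_wpM2l; lra.
  nra.
rewrite mulrA ler_pdivrMr //.
have : g * (E0 * x) * T <= Y * D * T by rewrite mulrA; nra.
by rewrite ler_pM2r.
Qed.

Lemma mulexpN (R : realType) (g a Y : R) : g <= expR a * Y -> g * expR (- a) <= Y.
Proof.
move=> h; rewrite -(ler_pM2l (expR_gt0 a)) mulrCA -expRD subrr expR0 mulr1.
exact: h.
Qed.

Local Close Scope classical_set_scope.

Theorem lemma1 (R : realType) (n : nat) (A : R -> 'M[R]_n)
  (zeta : R -> 'I_n -> R) (t0 t1 : R) (G H : {set 'I_n})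
  (gmin gmax mumin mumax : R) :
  pw_continuous_mx A ->
  (forall t, metzler (A t) /\ zero_row_sums (A t)) ->
  t0 <= t1 ->
  is_solution A zeta t0 t1 ->
  G != finset.set0 -> H != finset.set0 -> [disjoint G & H] -> G :|: H = finset.setT ->
  (exists2 k, k \in G & zeta t0 k = gmin) -> (forall k, k \in G -> gmin <= zeta t0 k) ->
  (exists2 k, k \in G & zeta t0 k = gmax) -> (forall k, k \in G -> zeta t0 k <= gmax) ->
  (forall k, mumin <= zeta t0 k) -> (forall k, zeta t0 k <= mumax) ->
  let aGH := \sum_(k in G) \sum_(l in H) intR (fun t => A t k l) t0 t1 in
  let aHG := \sum_(k in H) \sum_(l in G) intR (fun t => A t k l) t0 t1 in
  let aHH := \sum_(k in H) \sum_(l in H | k != l) intR (fun t => A t k l) t0 t1 in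
  let cH := (#|H|)%:R : R in
  let beta := expR (- aGH) * (aHG / cH) /
              (1 + expR aHH * (aHG / cH) + expR aHH * aHH) in
  (forall k, k \in G ->
     mumin + (gmin - mumin) * expR (- aGH) <= zeta t1 k
     <= mumax - (mumax - gmax) * expR (- aGH)) /\
  (exists2 k, k \in H &
     mumin + (gmin - mumin) * beta <= zeta t1 k
     <= mumax - (mumax - gmax) * beta).
Proof.
move=> pwA MZ t01 [zc [s zd]] G0 H0 dGH uGH [kmin kminG kminE] gminP
  [kmax kmaxG kmaxE] gmaxP mumP muMP aGH aHG aHH cH beta.
have dz : forall t, t0 < t -> t < t1 -> t \notin s -> forall k,
    is_derive t (1:R) (fun u => zeta u k) (\sum_l A t k l * zeta t l).
  move=> t ta tb ts k; have [d1 d2] := zd t (ltac:(by rewrite ta tb)) ts k.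
  by apply: DeriveDef => //; rewrite -derive1E.
pose y1 := fun t k => zeta t k - mumin.
pose y2 := fun t k => mumax - zeta t k.
have yc1 : forall k, {within `[t0, t1], continuous (fun t => y1 t k)}%classic.
  by move=> k; apply: within_add; [exact: zc | exact: within_cst].
have yc2 : forall k, {within `[t0, t1], continuous (fun t => y2 t k)}%classic.
  by move=> k; apply: within_add; [exact: within_cst | apply: within_opp; exact: zc].
have yd1 : exists s : seq R, forall t, t0 < t -> t < t1 -> t \notin s -> forall k,
    is_derive t (1:R) (fun u => y1 u k) (\sum_l A t k l * y1 t l).
  exists s => t ta tb ts k.
  have -> : \sum_l A t k l * y1 t l = \sum_l A t k l * zeta t l - 0.
    rewrite /y1; under eq_bigr do rewrite mulrBr.
    by rewrite sumrB -mulr_suml (proj2 (MZ t) k) mul0r.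
  exact: (is_deriveB (dz t ta tb ts k) (is_derive_cst mumin t (1:R))).
have yd2 : exists s : seq R, forall t, t0 < t -> t < t1 -> t \notin s -> forall k,
    is_derive t (1:R) (fun u => y2 u k) (\sum_l A t k l * y2 t l).
  exists s => t ta tb ts k.
  have -> : \sum_l A t k l * y2 t l = 0 - \sum_l A t k l * zeta t l.
    rewrite /y2; under eq_bigr do rewrite mulrBr.
    by rewrite sumrB -mulr_suml (proj2 (MZ t) k) mul0r.
  exact: (is_deriveB (is_derive_cst mumax t (1:R)) (dz t ta tb ts k)).
have g10 : 0 <= gmin - mumin by rewrite subr_ge0 -kminE.
have g20 : 0 <= mumax - gmax by rewrite subr_ge0 -kmaxE.
have y10 : forall k, 0 <= y1 t0 k by move=> k; rewrite /y1 subr_ge0.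
have y20 : forall k, 0 <= y2 t0 k by move=> k; rewrite /y2 subr_ge0.
have y1g : forall k, k \in G -> gmin - mumin <= y1 t0 k.
  by move=> k kG; rewrite /y1 lerD2r; exact: gminP.
have y2g : forall k, k \in G -> mumax - gmax <= y2 t0 k.
  by move=> k kG; rewrite /y2 lerD2l lerN2; exact: gmaxP.
have t1in : t0 <= t1 <= t1 by rewrite t01 lexx.
have h21 : forall k, k \in G -> gmin - mumin <= expR aGH * y1 t1 k :=
  fun k kG => @step2 R n A t0 t1 G H pwA MZ t01 dGH uGH y1 yc1 yd1 y10 _ y1g t1 t1in k kG.
have h22 : forall k, k \in G -> mumax - gmax <= expR aGH * y2 t1 k :=
  fun k kG => @step2 R n A t0 t1 G H pwA MZ t01 dGH uGH y2 yc2 yd2 y20 _ y2g t1 t1in k kG.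
split.
  move=> k kG; have := @mulexpN R _ _ _ (h21 k kG); have := @mulexpN R _ _ _ (h22 k kG).
  by rewrite /y1 /y2 => u1 u2; apply/andP; split; lra.
have Ige : forall k l, k != l -> 0 <= intR (fun t => A t k l) t0 t1.
  by move=> k l kl; apply: intR_ge0 => x _; exact: (proj1 (MZ x)).
have cH0 : 0 < cH by rewrite /cH ltr0n card_gt0.
have aHG0 : 0 <= aHG.
  apply: sumr_ge0 => k kH; apply: sumr_ge0 => l lG; apply: Ige.
  by rewrite eq_sym; exact: (@GneH n G H dGH uGH l k lG kH).
have aHH0 : 0 <= aHH.
  by apply: sumr_ge0 => k kH; apply: sumr_ge0 => l /andP[_ kl]; exact: Ige.
have [ks ksH ksP] : exists2 ks, ks \in H &
    aHG / cH <= \sum_(l in G) intR (fun t => A t ks l) t0 t1.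
  case: (pselect (exists2 ks, ks \in H &
    aHG / cH <= \sum_(l in G) intR (fun t => A t ks l) t0 t1)) => // nex.
  exfalso.
  have lt : forall k, k \in H -> \sum_(l in G) intR (fun t => A t k l) t0 t1 < aHG / cH.
    move=> k kH; rewrite ltNge; apply/negP => le; apply: nex; by exists k.
  have /finset.set0Pn [x xH] := H0.
  have : aHG < \sum_(k in H) (aHG / cH).
    apply: ltr_sum => //; apply/hasP; exists x => //; exact: mem_index_enum.
  rewrite sumr_const -mulr_natr -/cH divfK ?ltxx //.
  by rewrite gt_eqF.
set P1 := \sum_(l in G) intR (fun t => A t ks l) t0 t1 in ksP.
set Q1 := \sum_(l in H | ks != l) intR (fun t => A t ks l) t0 t1.
have Q10 : 0 <= Q1 by apply: sumr_ge0 => l /andP[_ kl]; exact: Ige.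
have Q1a : Q1 <= aHH.
  rewrite /aHH (bigD1 ks) //= lerDl; apply: sumr_ge0 => k /andP[kH _].
  by apply: sumr_ge0 => l /andP[_ kl]; exact: Ige.
have h31 : (gmin - mumin) * expR (- aGH) * (expR P1 - 1) <= expR (P1 + Q1) * y1 t1 ks :=
  @step3 R n A t0 t1 G H pwA MZ t01 dGH uGH y1 yc1 yd1 y10 _ g10 y1g ks ksH.
have h32 : (mumax - gmax) * expR (- aGH) * (expR P1 - 1) <= expR (P1 + Q1) * y2 t1 ks :=
  @step3 R n A t0 t1 G H pwA MZ t01 dGH uGH y2 yc2 yd2 y20 _ g20 y2g ks ksH.
have x0 : 0 <= aHG / cH by apply: divr_ge0 => //; exact: ltW.
have E00 : 0 <= expR (- aGH) by exact: expR_ge0.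
have f1 := @fin_ineq R _ _ _ _ _ _ _ g10 E00 x0 aHH0 ksP Q10 Q1a h31.
have f2 := @fin_ineq R _ _ _ _ _ _ _ g20 E00 x0 aHH0 ksP Q10 Q1a h32.
exists ks => //.
move: f1 f2; rewrite -/beta /y1 /y2 => f1 f2.
by apply/andP; split; lra.
Qed.
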